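(* Let $G$ be a graph with $n$ vertices that is $p$-almost equitably $k$-colorable, where $k \le n$. Then there exists a set $X$ of exactly $\min\{p, n-k\}$ vertices such that $G \setminus X$ has an equitable $k$-coloring.
   Context: A $k$-coloring of a graph is equitable if it partitions the vertex set into $k$ stable sets (color classes) whose sizes pairwise differ by at most one. A graph $G$ is $p$-almost equitably $k$-colorable if there exists a set $X$ of at most $p$ vertices such that $G\setminus X$ has an equitable $k$-coloring. *)

(* Defs.v *)
From mathcomp Require Import all_boot.
Set Implicit Arguments. Unset Strict Implicit. Unset Printing Implicit Defensive.

(* A simple graph on a finite vertex type T is a symmetric irreflexive
   relation e : rel T.  G \ X is the induced subgraph on the vertex set ~: X. *)

Definition equitable_coloring (T : finType) (e : rel T) (S : {set T})
    (k : nat) (c : T -> nat) : Prop :=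
  [/\ (forall x, x \in S -> c x < k),
      (forall x y, x \in S -> y \in S -> e x y -> c x != c y) &
      (forall i j, i < k -> j < k ->
         #|[set x in S | c x == i]| <= #|[set x in S | c x == j]| + 1)].

Definition equitably_colorable (T : finType) (e : rel T) (S : {set T})
    (k : nat) : Prop :=
  exists c : T -> nat, equitable_coloring e S k c.

Definition almost_equitably_colorable (T : finType) (e : rel T)
    (p k : nat) : Prop :=
  exists X : {set T}, #|X| <= p /\ equitably_colorable e (~: X) k.

(* Main.v *)
Require Import Defs.
From mathcomp Require Import all_boot.
Set Warnings "-notation-overridden".
From mathcomp Require Import zify.
Set Implicit Arguments. Unset Strict Implicit. Unset Printing Implicit Defensive.

Lemma class_del (T : finType) (S : {set T}) (c : T -> nat) y j :
  y \in S ->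
  #|[set x in S :\ y | c x == j]| = #|[set x in S | c x == j]| - (c y == j).
Proof.
move=> yS.
have -> : [set x in S :\ y | c x == j] = [set x in S | c x == j] :\ y.
  by apply/setP=> z; rewrite !inE; case: (z == y).
rewrite (cardsD1 y [set x in S | c x == j]) inE yS /=.
by case: (c y == j) => /=; rewrite ?subn0 ?subn1 ?addnK // add0n setD1K // ?inE.
Qed.

Lemma shrink (T : finType) (e : rel T) (S : {set T}) k c x0 :
  x0 \in S -> equitable_coloring e S k c ->
  exists x, x \in S /\ equitable_coloring e (S :\ x) k c.
Proof.
move=> x0S [Hk Hs Hb].
have k0 : 0 < k by apply: leq_ltn_trans (Hk _ x0S).
pose cl (i : nat) := #|[set x in S | c x == i]|.
pose i : 'I_k := [arg max_(i > Ordinal k0) cl i].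
have imax : forall j : 'I_k, cl j <= cl i.
  rewrite /i; case: arg_maxnP => // i0 _ H j; exact: H.
have : 0 < cl i.
  apply: leq_trans (imax (Ordinal (Hk _ x0S))).
  by rewrite /cl card_gt0; apply/set0Pn; exists x0; rewrite inE x0S /=.
rewrite /cl card_gt0 => /set0Pn [x]; rewrite inE => /andP [xS /eqP cxi].
exists x; split => //; split.
- by move=> y; rewrite inE => /andP [_]; apply: Hk.
- by move=> y z; rewrite !inE => /andP [_ yS] /andP [_ zS]; apply: Hs.
- move=> a b ak bk; rewrite !class_del // cxi.
  have Ha := Hb a b ak bk.
  have Hib := Hb i b (ltn_ord i) bk.
  have Hai := imax (Ordinal ak).
  have Hbi := imax (Ordinal bk).
  rewrite /cl /= in Hai Hbi.
  case: (eqVneq (i : nat) a) => [<-|na]; case: (eqVneq (i : nat) b) => [<-|nb]; rewrite ?eqxx ?(negbTE na) ?(negbTE nb) /=; try lia.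
  all: idtac.

Qed.

Lemma grow (T : finType) (e : rel T) (S : {set T}) k c x :
  irreflexive e -> #|S| < k -> x \notin S -> equitable_coloring e S k c ->
  exists c', equitable_coloring e (x |: S) k c'.
Proof.
move=> irr Sk xS [Hk Hs Hb].
case: k Sk Hk Hs Hb => [//|k'] Sk Hk Hs Hb.
pose f (y : T) : 'I_k'.+1 := inord (c y).
have [i ni] : exists i : 'I_k'.+1, forall y, y \in S -> c y != i.
  case: (boolP [exists i : 'I_k'.+1, [forall y in S, c y != i]]) => [/existsP [i /forallP ni]| /existsPn H].
    by exists i => y yS; have := ni y; rewrite yS.
  have : f @: S = setT.
    apply/setP=> j; rewrite inE; move: (H j); rewrite negb_forall => /existsP [y].
    rewrite negb_imply negbK => /andP [yS /eqP cy].
    apply/imsetP; exists y => //; apply: val_inj; rewrite /f /= inordK // ltnS.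
    by rewrite cy -ltnS.
  move=> fS; have := leq_imset_card f S; rewrite fS cardsT card_ord; lia.
have cl1 : forall j, j < k'.+1 -> #|[set x in S | c x == j]| <= 1.
  move=> j jk; have := Hb j i jk (ltn_ord i).
  suff -> : #|[set x in S | c x == i]| = 0 by [].
  apply/eqP; rewrite cards_eq0; apply/eqP/setP=> y; rewrite !inE.
  by apply/negP => /andP [yS /eqP cy]; move: (ni y yS); rewrite cy eqxx.
exists (fun y => if y == x then (i : nat) else c y); split.
- by move=> y; rewrite !inE; case: eqP => [_|_ /= /Hk] //.
- move=> y z; rewrite !inE.
  case: (eqVneq y x) => [->|yx]; case: (eqVneq z x) => [->|zx] /=.
  + by rewrite irr.
  + by move=> _ zS _; rewrite eq_sym ni.
  + by move=> yS _ _; rewrite ni.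
  + exact: Hs.
- suff H : forall j, j < k'.+1 -> #|[set y in x |: S | (if y == x then (i : nat) else c y) == j]| <= 1.
    by move=> a b ak bk; apply: leq_trans (H a ak) _; rewrite leq_addl.
  move=> j jk.
  case: (eqVneq (i : nat) j) => [<-|ij].
  + have -> : [set y in x |: S | (if y == x then (i : nat) else c y) == i] = [set x].
      apply/setP=> y; rewrite !inE; case: (eqVneq y x) => [_|_] /=; first exact: eqxx.
      by apply/negP => /andP [yS /eqP cy]; move: (ni y yS); rewrite cy eqxx.
    by rewrite cards1.
  + apply: leq_trans (cl1 j jk); apply: subset_leq_card; apply/subsetP=> y.
    rewrite !inE; case: (eqVneq y x) => [_ /=|_ /=]; last by []. by rewrite (negbTE ij).
Qed.

Lemma shrink_n (T : finType) (e : rel T) k d : forall S : {set T},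
  d <= #|S| -> equitably_colorable e S k ->
  exists S' : {set T}, #|S'| = #|S| - d /\ equitably_colorable e S' k.
Proof.
elim: d => [|d IH] S dS [c Hc]; first by exists S; rewrite subn0; split => //; exists c.
have [x0 x0S] : exists x, x \in S.
  by apply/set0Pn; rewrite -card_gt0; apply: leq_trans dS.
have [x [xS Hc']] := shrink x0S Hc.
have Sx : #|S| = #|S :\ x|.+1 by rewrite (cardsD1 x S) xS.
have [|S' [H1 H2]] := IH (S :\ x) _ (ex_intro _ c Hc'); first by rewrite -ltnS -Sx.
by exists S'; rewrite H1 Sx subSS.
Qed.

Lemma grow_n (T : finType) (e : rel T) k d : irreflexive e -> k <= #|T| -> forall S : {set T},
  #|S| + d <= k -> equitably_colorable e S k ->
  exists S' : {set T}, #|S'| = #|S| + d /\ equitably_colorable e S' k.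
Proof.
move=> irr kT; elim: d => [|d IH] S dS [c Hc]; first by exists S; rewrite addn0; split => //; exists c.
have [x xS] : exists x, x \notin S.
  apply/existsP; rewrite -negb_forall; apply/negP => /forallP H.
  have : #|T| <= #|S| by rewrite -cardsT subset_leq_card //; apply/subsetP => y _; exact: H.
  lia.
have Sk : #|S| < k by lia.
have [c' Hc'] := grow irr Sk xS Hc.
have Sx : #|x |: S| = #|S|.+1 by rewrite cardsU1 xS.
have Sd : #|x |: S| + d <= k by lia.
have [S' [H1 H2]] := IH (x |: S) Sd (ex_intro _ c' Hc').
by exists S'; rewrite H1 Sx addSnnS.
Qed.

Theorem claim1 (T : finType) (e : rel T) (p k : nat) :
  symmetric e -> irreflexive e ->
  k <= #|T| ->
  almost_equitably_colorable e p k ->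
  exists X : {set T}, #|X| = minn p (#|T| - k) /\ equitably_colorable e (~: X) k.
Proof.
move=> _ irr kT [X0 [X0p Hc]].
have cS := cardsCs X0.
have cX := cardsCs (~: X0); rewrite setCK in cX.
pose t := #|T| - minn p (#|T| - k).
suff [S' [H1 H2]] : exists S' : {set T}, #|S'| = t /\ equitably_colorable e S' k.
  exists (~: S'); rewrite setCK; split => //.
  have := cardsCs (~: S'); rewrite setCK; rewrite /t in H1; lia.
case: (leqP t #|~: X0|) => tle.
  have dS : #|~: X0| - t <= #|~: X0| by lia.
  have [S' [H1 H2]] := shrink_n dS Hc.
  by exists S'; rewrite H1; split => //; lia.
have dS : #|~: X0| + (t - #|~: X0|) <= k by rewrite /t in tle *; lia.
have [S' [H1 H2]] := grow_n irr kT dS Hc.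
by exists S'; rewrite H1; split => //; lia.
Qed.
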